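(* (a) The Schubert cell $S_{w_0,s_1}$ is the disjoint union of exactly two $G$-orbits of points $(P,Pw_0,Ps_1n)$: $n=n(1,0,0)$, dimension $7$, stabilizer $\{d(a,a,1/a^2):a\in\mathbb{R}^\times\}$; and $n=n(0,0,0)$, dimension $6$, stabilizer $D$. (b) The cell $S_{w_0,s_2}$ is the disjoint union of exactly two $G$-orbits of points $(P,Pw_0,Ps_2n)$: $n=n(0,0,1)$, dimension $7$, stabilizer $\{d(1/a^2,a,a):a\in\mathbb{R}^\times\}$; and $n=n(0,0,0)$, dimension $6$, stabilizer $D$. (c) The cell $S_{w_0,1}$ is a single $G$-orbit, that of $(P,Pw_0,P)$; it has dimension $6$ and stabilizer $D$.
   Context: $G=\mathrm{SL}_3(\mathbb{R})$, $P$ the upper triangular matrices in $G$, $D$ the diagonal matrices in $G$; $G$ acts on $X=(P\backslash G)^3$ by right multiplication in each coordinate. $n(x,y,z)=\begin{pmatrix}1&x&y\\0&1&z\\0&0&1\end{pmatrix}$, $d(a,b,c)=\operatorname{diag}(a,b,c)$. $1$ is the identity matrix, $w_0=\begin{pmatrix}0&0&-1\\0&-1&0\\-1&0&0\end{pmatrix}$, $s_1=\begin{pmatrix}0&1&0\\1&0&0\\0&0&-1\end{pmatrix}$, $s_2=\begin{pmatrix}-1&0&0\\0&0&1\\0&1&0\end{pmatrix}$. $S_{v,w}=\big(\{P\}\times P\backslash PvP\times P\backslash PwP\big)\cdot G$. The stabilizer of $(P,Pv,Pwn)$ is $P\cap v^{-1}Pv\cap (wn)^{-1}P(wn)$. 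*)

(* Defs.v *)
From HB Require Import structures.
From mathcomp Require Import all_boot all_order all_algebra.
From mathcomp Require Import reals.
Set Implicit Arguments. Unset Strict Implicit. Unset Printing Implicit Defensive.
Import Order.TTheory GRing.Theory Num.Theory.
Local Open Scope ring_scope.

Section SL3.
Variable R : realType.

Definition mx3 (a b c d e f g h k : R) : 'M[R]_3 :=
  \matrix_(i < 3, j < 3)
    nth 0 (nth [::] [:: [:: a; b; c]; [:: d; e; f]; [:: g; h; k]] i) j.

Definition inG (g : 'M[R]_3) : bool := \det g == 1.
Definition upper (g : 'M[R]_3) : bool :=
  [forall i : 'I_3, forall j : 'I_3, (j < i)%N ==> (g i j == 0)].
Definition inP (g : 'M[R]_3) : bool := inG g && upper g.

Definition nmx (x y z : R) : 'M[R]_3 := mx3 1 x y 0 1 z 0 0 1.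
Definition dmx (a b c : R) : 'M[R]_3 := mx3 a 0 0 0 b 0 0 0 c.
Definition w0 : 'M[R]_3 := mx3 0 0 (-1) 0 (-1) 0 (-1) 0 0.
Definition s1 : 'M[R]_3 := mx3 0 1 0 1 0 0 0 0 (-1).
Definition s2 : 'M[R]_3 := mx3 (-1) 0 0 0 0 1 0 1 0.

(* A point (Pg1, Pg2, Pg3) of X = (P\G)^3 is represented by a triple of
   representatives (g1, g2, g3) in G^3. *)
Definition pt := ('M[R]_3 * 'M[R]_3 * 'M[R]_3)%type.
Definition isPt (x : pt) : Prop := [/\ inG x.1.1, inG x.1.2 & inG x.2].

(* P g = P g'  iff  g' g^{-1} \in P *)
Definition sameCoset (g g' : 'M[R]_3) : bool := inP (g' *m invmx g).
Definition sameX (x y : pt) : Prop :=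
  [/\ sameCoset x.1.1 y.1.1, sameCoset x.1.2 y.1.2 & sameCoset x.2 y.2].

Definition act (x : pt) (h : 'M[R]_3) : pt := (x.1.1 *m h, x.1.2 *m h, x.2 *m h).

Definition inOrbit (x y : pt) : Prop := exists h, inG h /\ sameX (act x h) y.

Definition bruhat (v g : 'M[R]_3) : Prop :=
  exists p1 p2, [/\ inP p1, inP p2 & g = p1 *m v *m p2].

(* S_{v,w} = ({P} x P\PvP x P\PwP).G : y = (P, Pa, Pb).h with a \in PvP, b \in PwP *)
Definition inS (v w : 'M[R]_3) (y : pt) : Prop :=
  isPt y /\ exists h, [/\ inG h, inP (y.1.1 *m invmx h),
                          bruhat v (y.1.2 *m invmx h) & bruhat w (y.2 *m invmx h)].

Definition inStab (x : pt) (h : 'M[R]_3) : Prop := inG h /\ sameX (act x h) x.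

(* Lie algebra of the stabilizer of x = (Pg1,Pg2,Pg3):
   sl_3 \cap g1^{-1} b g1 \cap g2^{-1} b g2 \cap g3^{-1} b g3, b = upper triangular *)
Definition stabLie (x : pt) (X : 'M[R]_3) : Prop :=
  [/\ \tr X = 0, upper (x.1.1 *m X *m invmx x.1.1),
      upper (x.1.2 *m X *m invmx x.1.2) & upper (x.2 *m X *m invmx x.2)].

(* the G-orbit of x has dimension d: dim G - dim Lie(Stab x) = d, dim G = 8 *)
Definition orbit_dim (x : pt) (d : nat) : Prop :=
  exists (k : nat) (s : k.-tuple 'M[R]_3),
    [/\ (k + d)%N = 8%N, free s & forall X, stabLie x X <-> X \in <<s>>%VS].

End SL3.

(* Main.v *)
Require Import Defs.
From HB Require Import structures.
From mathcomp Require Import all_boot all_order all_algebra.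
From mathcomp Require Import reals ring lra.
Import Order.TTheory GRing.Theory Num.Theory.
Local Open Scope ring_scope.
Set Implicit Arguments. Unset Strict Implicit. Unset Printing Implicit Defensive.

Section L.
Variable R : realType.
Implicit Types a b c d e f g h k : R.

Lemma mx3_mul a b c d e f g h k a' b' c' d' e' f' g' h' k' :
  mx3 a b c d e f g h k *m mx3 a' b' c' d' e' f' g' h' k' =
  mx3 (a*a'+b*d'+c*g') (a*b'+b*e'+c*h') (a*c'+b*f'+c*k')
      (d*a'+e*d'+f*g') (d*b'+e*e'+f*h') (d*c'+e*f'+f*k')
      (g*a'+h*d'+k*g') (g*b'+h*e'+k*h') (g*c'+h*f'+k*k').
Proof.
apply/matrixP => i j; rewrite !mxE !big_ord_recr big_ord0 /= !mxE /=.
by case: i => [[|[|[|i]]] Hi] //; case: j => [[|[|[|j]]] Hj] //=; rewrite add0r.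
Qed.

Lemma mx3_eta (M : 'M[R]_3) : M = mx3 (M 0 0) (M 0 1) (M 0 2) (M 1 0) (M 1 1) (M 1 2) (M 2 0) (M 2 1) (M 2 2).
Proof.
apply/matrixP => i j; rewrite !mxE.
by case: i => [[|[|[|i]]] Hi] //; case: j => [[|[|[|j]]] Hj] //=; congr (M _ _); apply/val_inj.
Qed.

Lemma mx3_inj a b c d e f g h k a' b' c' d' e' f' g' h' k' :
  mx3 a b c d e f g h k = mx3 a' b' c' d' e' f' g' h' k' ->
  a = a' /\ b = b' /\ c = c' /\ d = d' /\ e = e' /\ f = f' /\ g = g' /\ h = h' /\ k = k'.
Proof.
move=> E.
have F i j : (mx3 a b c d e f g h k) i j = (mx3 a' b' c' d' e' f' g' h' k') i j by rewrite E.
move: (F 0 0) (F 0 1) (F 0 2) (F 1 0) (F 1 1) (F 1 2) (F 2 0) (F 2 1) (F 2 2).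
by rewrite !mxE /= => *; repeat split.
Qed.

Lemma mx3_det a b c d e f g h k :
  \det (mx3 a b c d e f g h k) = a*(e*k - f*h) - b*(d*k - f*g) + c*(d*h - e*g).
Proof.
rewrite (expand_det_row _ 0) !big_ord_recr big_ord0 /= add0r.
rewrite /cofactor !(expand_det_row _ 0) !big_ord_recr big_ord0 /= !add0r.
rewrite /cofactor !det_mx11 !mxE /= !big_ord0 /=.
rewrite !addn0 !add0n /=; ring.
Qed.

End L.
Section L2.
Variable R : realType.
Implicit Types a b c e f k : R.

Lemma id3 : (1%:M : 'M[R]_3) = mx3 1 0 0 0 1 0 0 0 1.
Proof.
apply/matrixP => i j; rewrite !mxE.
by case: i => [[|[|[|i]]] Hi] //; case: j => [[|[|[|j]]] Hj] //=.
Qed.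

Lemma upper_mx3 (a b c d e f g h k : R) :
  upper (mx3 a b c d e f g h k) = [&& d == 0, g == 0 & h == 0].
Proof.
apply/forallP/and3P => [H|[H1 H2 H3] i].
  split; [move: (H 1) | move: (H 2) | move: (H 2)] => /forallP;
    [move/(_ 0) | move/(_ 0) | move/(_ 1)]; rewrite mxE //=.
apply/forallP => j; apply/implyP; rewrite mxE.
by case: i => [[|[|[|i]]] Hi] //; case: j => [[|[|[|j]]] Hj] //=.
Qed.

Lemma upperP (M : 'M[R]_3) : upper M <-> exists a b c e f k, M = mx3 a b c 0 e f 0 0 k.
Proof.
split => [|[a [b [c [e [f [k ->]]]]]]]; last by rewrite upper_mx3 !eqxx.
rewrite (mx3_eta M) upper_mx3 => /and3P[/eqP-> /eqP-> /eqP->].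
by do 6 eexists.
Qed.

Lemma inPP (M : 'M[R]_3) : inP M <-> exists a b c e f k, a * e * k = 1 /\ M = mx3 a b c 0 e f 0 0 k.
Proof.
rewrite /inP /inG; split => [/andP[/eqP D /upperP [a [b [c [e [f [k E]]]]]]]|[a [b [c [e [f [k [D E]]]]]]]].
  do 6 eexists; split; last exact E.
  by move: D; rewrite E mx3_det => <-; ring.
apply/andP; split; last by apply/upperP; do 6 eexists; exact E.
by rewrite E mx3_det -D; apply/eqP; ring.
Qed.

Lemma unitG (g : 'M[R]_3) : inG g -> g \in unitmx.
Proof. by rewrite /inG unitmxE => /eqP ->; rewrite unitr1. Qed.

Lemma inG_mul (g g' : 'M[R]_3) : inG g -> inG g' -> inG (g *m g').
Proof. by rewrite /inG det_mulmx => /eqP -> /eqP ->; rewrite mulr1. Qed.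

Lemma invmx_eq (A B : 'M[R]_3) : A *m B = 1%:M -> invmx A = B.
Proof.
move=> E; have [uA _] := mulmx1_unit E.
by rewrite -[RHS](mulKmx uA) E mulmx1.
Qed.

Lemma inG_inv (g : 'M[R]_3) : inG g -> inG (invmx g).
Proof.
move=> G; have := mulVmx (unitG G); move/(congr1 determinant).
rewrite det_mulmx det1; move: G; rewrite /inG => /eqP ->; rewrite mulr1 => ->.
by [].
Qed.

Lemma inP_mul (p q : 'M[R]_3) : inP p -> inP q -> inP (p *m q).
Proof.
move=> /inPP [a [b [c [e [f [k [D ->]]]]]]] /inPP [a' [b' [c' [e' [f' [k' [D' ->]]]]]]].
rewrite mx3_mul; apply/inPP; do 6 eexists; split; last first.
  congr mx3; ring.
transitivity ((a*e*k)*(a'*e'*k')); [ring | by rewrite D D' mulr1].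
Qed.

Lemma inP_inv (p : 'M[R]_3) : inP p -> inP (invmx p).
Proof.
move=> /inPP [a [b [c [e [f [k [D ->]]]]]]].
rewrite (@invmx_eq _ (mx3 (e*k) (-b*k) (b*f - c*e) 0 (a*k) (-a*f) 0 0 (a*e))).
  apply/inPP; do 6 eexists; split; last reflexivity.
  transitivity ((a*e*k)*(a*e*k)); [ring | by rewrite D mulr1].
rewrite mx3_mul id3; congr mx3; rewrite -?D; ring.
Qed.

Lemma inP1 : inP (1%:M : 'M[R]_3).
Proof. by rewrite id3; apply/inPP; exists 1, 0, 0, 1, 0, 1; split; [by rewrite !mulr1|by []]. Qed.

Lemma inP_G (p : 'M[R]_3) : inP p -> inG p.
Proof. by case/andP. Qed.

Lemma sameCosetP (g g' : 'M[R]_3) : inG g ->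
  (sameCoset g g' <-> exists p, inP p /\ g' = p *m g).
Proof.
move=> G; rewrite /sameCoset; split => [H|[p [Pp ->]]].
  by exists (g' *m invmx g); split => //; rewrite mulmxKV // unitG.
by rewrite mulmxK // unitG.
Qed.


Lemma orbitP (x y : pt R) : isPt x ->
  (inOrbit x y <-> exists h : 'M[R]_3, inG h /\ exists p1 p2 p3, [/\ inP p1, inP p2 & inP p3] /\
     [/\ y.1.1 = p1 *m (x.1.1 *m h), y.1.2 = p2 *m (x.1.2 *m h) & y.2 = p3 *m (x.2 *m h)]).
Proof.
case=> G1 G2 G3; split => [[h [Gh [S1 S2 S3]]]|[h [Gh [p1 [p2 [p3 [[P1 P2 P3] [E1 E2 E3]]]]]]]].
  move/sameCosetP: S1 => /(_ (inG_mul G1 Gh)) [p1 [P1 E1]].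
  move/sameCosetP: S2 => /(_ (inG_mul G2 Gh)) [p2 [P2 E2]].
  move/sameCosetP: S3 => /(_ (inG_mul G3 Gh)) [p3 [P3 E3]].
  by exists h; split => //; exists p1, p2, p3.
exists h; split => //; split.
- by apply/sameCosetP; [exact: inG_mul | exists p1].
- by apply/sameCosetP; [exact: inG_mul | exists p2].
- by apply/sameCosetP; [exact: inG_mul | exists p3].
Qed.

Lemma stabP (x : pt R) (h : 'M[R]_3) : isPt x ->
  (inStab x h <-> inG h /\ exists p1 p2 p3, [/\ inP p1, inP p2 & inP p3] /\
     [/\ x.1.1 = p1 *m (x.1.1 *m h), x.1.2 = p2 *m (x.1.2 *m h) & x.2 = p3 *m (x.2 *m h)]).
Proof.
case=> G1 G2 G3; split => [[Gh [S1 S2 S3]]|[Gh [p1 [p2 [p3 [[P1 P2 P3] [E1 E2 E3]]]]]]].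
  move/sameCosetP: S1 => /(_ (inG_mul G1 Gh)) [p1 [P1 E1]].
  move/sameCosetP: S2 => /(_ (inG_mul G2 Gh)) [p2 [P2 E2]].
  move/sameCosetP: S3 => /(_ (inG_mul G3 Gh)) [p3 [P3 E3]].
  by split => //; exists p1, p2, p3.
split => //; split.
- by apply/sameCosetP; [exact: inG_mul | exists p1].
- by apply/sameCosetP; [exact: inG_mul | exists p2].
- by apply/sameCosetP; [exact: inG_mul | exists p3].
Qed.

Lemma eq_mulinv (A B h : 'M[R]_3) : inG h -> (A *m invmx h = B <-> A = B *m h).
Proof.
move=> Gh; split => [<-|->]; first by rewrite mulmxKV // unitG.
by rewrite mulmxK // unitG.
Qed.

Lemma inSP v w (y : pt R) : inS v w y <-> isPt y /\ exists h : 'M[R]_3, inG h /\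
  exists p0 p1 p2 q1 q2, ([/\ inP p0, inP p1, inP p2 & inP q1] /\ inP q2) /\
  [/\ y.1.1 = p0 *m h, y.1.2 = p1 *m v *m p2 *m h & y.2 = q1 *m w *m q2 *m h].
Proof.
split => [[Py [h [Gh S1 [p1 [p2 [P1 P2 E2]]] [q1 [q2 [Q1 Q2 E3]]]]]]|
          [Py [h [Gh [p0 [p1 [p2 [q1 [q2 [[[P0 P1 P2 Q1] Q2] [E1 E2 E3]]]]]]]]]]].
  move/sameCosetP: S1 => /(_ Gh) [p0 [P0 E1]].
  move/eq_mulinv: E2 => /(_ Gh) E2; move/eq_mulinv: E3 => /(_ Gh) E3.
  split => //; exists h; split => //; by exists p0, p1, p2, q1, q2; split; first split.
split => //; exists h; split => //.
- by change (sameCoset h y.1.1); apply/sameCosetP => //; exists p0.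
- by exists p1, p2; split => //; apply/eq_mulinv.
- by exists q1, q2; split => //; apply/eq_mulinv.
Qed.

Lemma w0_inv : invmx (w0 R) = w0 R.
Proof. by apply: invmx_eq; rewrite /w0 mx3_mul id3; congr mx3; ring. Qed.

Lemma w0G : inG (w0 R).
Proof. by rewrite /inG /w0 mx3_det; apply/eqP; ring. Qed.

Lemma dmxG a b c : a * b * c = 1 -> inG (dmx a b c).
Proof. by move=> D; rewrite /inG /dmx mx3_det -D; apply/eqP; ring. Qed.

Lemma dmxP a b c : a * b * c = 1 -> inP (dmx a b c).
Proof. by move=> D; apply/inPP; exists a, 0, 0, b, 0, c; split. Qed.

Lemma w0_diag a b c : a * b * c = 1 ->
  dmx (c^-1) (b^-1) (a^-1) *m w0 R *m dmx a b c = w0 R.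
Proof.
move=> D.
have a0 : a != 0 by apply/eqP => a0; move: D; rewrite a0 !mul0r; apply/eqP; rewrite eq_sym oner_eq0.
have b0 : b != 0 by apply/eqP => b0; move: D; rewrite b0 mulr0 mul0r; apply/eqP; rewrite eq_sym oner_eq0.
have c0 : c != 0 by apply/eqP => c0; move: D; rewrite c0 mulr0; apply/eqP; rewrite eq_sym oner_eq0.
rewrite /dmx /w0 !mx3_mul; congr mx3; field; by rewrite ?a0 ?b0 ?c0.
Qed.

Lemma S_decomp s (y : pt R) : inS (w0 R) s y -> isPt y /\ exists r g p0 p1 q1,
  [/\ inP r, inG g, inP p0, inP p1 & inP q1] /\
  [/\ y.1.1 = p0 *m g, y.1.2 = p1 *m w0 R *m g & y.2 = q1 *m s *m r *m g].
Proof.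
case/inSP => Py [h [Gh [p0 [p1 [p2 [q1 [q2 [[[P0 P1 P2 Q1] Q2] [E1 E2 E3]]]]]]]]].
split => //.
have u2 : p2 \in unitmx by apply/unitG/inP_G.
exists (q2 *m invmx p2), (p2 *m h), (p0 *m invmx p2), p1, q1; split.
  split => //.
  - by apply: inP_mul => //; exact: inP_inv.
  - by apply: inG_mul => //; exact: inP_G.
  - by apply: inP_mul => //; exact: inP_inv.
by split; rewrite ?E1 ?E2 ?E3 !mulmxA ?mulmxKV.
Qed.

Lemma decomp_orbit s m r g p0 p1 q1 p' a b c (y : pt R) :
  inG m -> inP r -> inG g -> inP p0 -> inP p1 -> inP q1 -> inP p' -> a * b * c = 1 ->
  y.1.1 = p0 *m g -> y.1.2 = p1 *m w0 R *m g -> y.2 = q1 *m s *m r *m g ->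
  s *m r = p' *m m *m dmx a b c ->
  inOrbit (1%:M, w0 R, m) y.
Proof.
move=> Gm Pr Gg P0 P1 Q1 P' D E1 E2 E3 Es.
have Pt := dmxP D; have ut : dmx a b c \in unitmx by apply/unitG/inP_G.
apply/orbitP; first by split => //=; [rewrite /inG det1 | exact: w0G].
exists (dmx a b c *m g); split; first by apply: inG_mul => //; exact: inP_G.
exists (p0 *m invmx (dmx a b c)), (p1 *m dmx c^-1 b^-1 a^-1), (q1 *m p'); split; split => /=.
- by apply: inP_mul => //; exact: inP_inv.
- apply: inP_mul => //; apply: dmxP.
  have a0 : a != 0 by apply/eqP => a0; move: D; rewrite a0 !mul0r; apply/eqP; rewrite eq_sym oner_eq0.
  have b0 : b != 0 by apply/eqP => b0; move: D; rewrite b0 mulr0 mul0r; apply/eqP; rewrite eq_sym oner_eq0.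
  have c0 : c != 0 by apply/eqP => c0; move: D; rewrite c0 mulr0; apply/eqP; rewrite eq_sym oner_eq0.
  by rewrite -[1]invr1 -D !invfM; field; rewrite ?a0 ?b0 ?c0.
- exact: inP_mul.
- by rewrite E1 mul1mx !mulmxA mulmxKV.
- by rewrite E2 -!mulmxA; congr (_ *m _); rewrite !mulmxA (w0_diag D).
- by rewrite E3 -(mulmxA q1) Es !mulmxA.
Qed.

Lemma bruhatG (s m : 'M[R]_3) : inG s -> bruhat s m -> inG m.
Proof.
move=> Gs [b1 [b2 [B1 B2 ->]]]; apply: inG_mul; last exact: inP_G.
by apply: inG_mul => //; exact: inP_G.
Qed.

Lemma orbit_S (s m : 'M[R]_3) (y : pt R) : inG s -> bruhat s m -> isPt y ->
  inOrbit (1%:M, w0 R, m) y -> inS (w0 R) s y.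
Proof.
move=> Gs Bm Py; have Gm := bruhatG Gs Bm.
move: Bm => [b1 [b2 [B1 B2 Em]]].
case/orbitP; first by split => /=; [rewrite /inG det1 | exact: w0G | exact: Gm].
move=> h [Gh [p1 [p2 [p3 [[P1 P2 P3] /= [E1 E2 E3]]]]]].
apply/inSP; split => //; exists h; split => //.
exists p1, p2, 1%:M, (p3 *m b1), b2; split.
  split => //; split => //; [exact: inP1 | exact: inP_mul].
by split; rewrite ?E1 ?E2 ?E3 ?Em ?mul1mx ?mulmx1 ?mulmxA.
Qed.


Lemma det_nz a e k : a * e * k = 1 -> [/\ a != 0, e != 0 & k != 0].
Proof.
move=> D; split; apply/eqP => Z; move: D; rewrite Z ?mulr0 ?mul0r ?mulr0 => /eqP; by rewrite eq_sym oner_eq0.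
Qed.

Lemma mulfI0 k v : k != 0 -> k * v = 0 -> v = 0.
Proof. by move=> k0 /eqP; rewrite mulf_eq0 (negbTE k0) => /eqP. Qed.

Lemma diag_of (p h : 'M[R]_3) : inP p -> inP h -> w0 R = p *m (w0 R *m h) ->
  exists u x z, u * x * z = 1 /\ h = dmx u x z.
Proof.
move=> /inPP [a [b [c [e [f [k [D ->]]]]]]] /inPP [u [v [w [x [y [z [Dh ->]]]]]]].
rewrite /w0 !mx3_mul => /mx3_inj [E11 [E12 [E13 [E21 [E22 [E23 [E31 [E32 E33]]]]]]]].
have [a0 e0 k0] := det_nz D.
have v0 : v = 0 by apply: (mulfI0 k0); lra.
have w0 : w = 0 by apply: (mulfI0 k0); lra.
have y0 : y = 0 by apply: (mulfI0 e0); move: E23; rewrite w0; lra.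
by exists u, x, z; split => //; rewrite v0 w0 y0.
Qed.


Lemma mx3_scale k (a b c d e f g h i : R) :
  k *: mx3 a b c d e f g h i = mx3 (k*a) (k*b) (k*c) (k*d) (k*e) (k*f) (k*g) (k*h) (k*i).
Proof.
apply/matrixP => x y; rewrite !mxE.
by case: x => [[|[|[|x]]] Hx] //; case: y => [[|[|[|y]]] Hy] //=; rewrite mulr0.
Qed.

Lemma mx3_add (a b c d e f g h i a' b' c' d' e' f' g' h' i' : R) :
  mx3 a b c d e f g h i + mx3 a' b' c' d' e' f' g' h' i' =
  mx3 (a+a') (b+b') (c+c') (d+d') (e+e') (f+f') (g+g') (h+h') (i+i').
Proof.
apply/matrixP => x y; rewrite !mxE.
by case: x => [[|[|[|x]]] Hx] //; case: y => [[|[|[|y]]] Hy] //=; rewrite addr0.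
Qed.

Lemma tr_mx3 (a b c d e f g h i : R) : \tr (mx3 a b c d e f g h i) = a + e + i.
Proof. by rewrite /mxtrace !big_ord_recr big_ord0 !mxE /= add0r. Qed.

Lemma stabLieE (m mi X : 'M[R]_3) : invmx m = mi ->
  stabLie (1%:M, w0 R, m) X <->
  [/\ \tr X = 0, upper X, upper (w0 R *m X *m w0 R) & upper (m *m X *m mi)].
Proof. by move=> E; rewrite /stabLie /= E w0_inv invmx1 mul1mx mulmx1. Qed.

Lemma upper_eq0 (a b c d e f g h i : R) :
  d = 0 -> g = 0 -> h = 0 -> upper (mx3 a b c d e f g h i).
Proof. by move=> -> -> ->; rewrite upper_mx3 !eqxx. Qed.

Lemma dmx_neq0 (a b c : R) : a != 0 -> dmx a b c != 0.
Proof.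
move=> a0; apply/eqP => H; have := congr1 (fun M : 'M[R]_3 => M 0 0) H.
by rewrite !mxE /=; apply/eqP.
Qed.

Definition v1d : 'M[R]_3 := dmx 1 (-1) 0.
Definition v2d : 'M[R]_3 := dmx 0 1 (-1).

Lemma span2P (X : 'M[R]_3) :
  X \in <<[:: v1d; v2d]>>%VS <-> exists al be, X = dmx al (be - al) (- be).
Proof.
rewrite span_cons span_seq1; split.
  case/memv_addP => u /vlineP [al ->] [v /vlineP [be ->] ->].
  exists al, be; rewrite /v1d /v2d !mx3_scale mx3_add; congr mx3; ring.
move=> [al [be ->]]; apply/memv_addP; exists (al *: v1d); first by apply/vlineP; eexists.
exists (be *: v2d); first by apply/vlineP; eexists.
rewrite /v1d /v2d !mx3_scale mx3_add; congr mx3; ring.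
Qed.

Lemma free2 : free [:: v1d; v2d].
Proof.
rewrite free_cons seq1_free span_seq1; apply/andP; split.
  apply/negP => /vlineP [k H]; have := congr1 (fun M : 'M[R]_3 => M 0 0) H.
  rewrite /v1d /v2d mx3_scale !mxE /= mulr0; apply/eqP; exact: oner_neq0.
apply/eqP => H; have := congr1 (fun M : 'M[R]_3 => M 1 1) H.
rewrite /v2d !mxE /=; apply/eqP; exact: oner_neq0.
Qed.

Lemma orbit_dim_diag (m mi : 'M[R]_3) : invmx m = mi ->
  (forall p q r, upper (m *m dmx p q r *m mi)) ->
  orbit_dim (1%:M, w0 R, m) 6.
Proof.
move=> E Hm; exists 2%N, [tuple v1d; v2d]; split => //=; first exact: free2.
move=> X; rewrite (stabLieE X E) span2P; split.
  rewrite (mx3_eta X) tr_mx3 /w0 !mx3_mul !upper_mx3.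
  move=> [T /and3P [/eqP H1 /eqP H2 /eqP H3] /and3P [/eqP H4 /eqP H5 /eqP H6] _].
  exists (X 0 0), (- X 2 2); rewrite /dmx; congr mx3; lra.
move=> [al [be ->]]; split.
- by rewrite /dmx tr_mx3; ring.
- by apply: upper_eq0.
- by rewrite /w0 /dmx !mx3_mul; apply: upper_eq0; ring.
- exact: Hm.
Qed.


Lemma inv_s1n1 : invmx (s1 R *m nmx 1 0 0) = nmx (-1) 0 0 *m s1 R.
Proof. by apply: invmx_eq; rewrite /s1 /nmx !mx3_mul id3; congr mx3; ring. Qed.

Lemma inv_s1n0 : invmx (s1 R *m nmx 0 0 0) = s1 R.
Proof. by apply: invmx_eq; rewrite /s1 /nmx !mx3_mul id3; congr mx3; ring. Qed.

Lemma inv_s2n1 : invmx (s2 R *m nmx 0 0 1) = nmx 0 0 (-1) *m s2 R.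
Proof. by apply: invmx_eq; rewrite /s2 /nmx !mx3_mul id3; congr mx3; ring. Qed.

Lemma inv_s2n0 : invmx (s2 R *m nmx 0 0 0) = s2 R.
Proof. by apply: invmx_eq; rewrite /s2 /nmx !mx3_mul id3; congr mx3; ring. Qed.

Lemma orbit_dim_a1 : orbit_dim (1%:M, w0 R, s1 R *m nmx 1 0 0) 7.
Proof.
exists 1%N, [tuple dmx 1 1 (-2)]; split => //=.
  by rewrite seq1_free dmx_neq0 ?oner_neq0.
move=> X; rewrite (stabLieE X inv_s1n1) span_seq1; split.
  rewrite (mx3_eta X) tr_mx3 /w0 /s1 /nmx !mx3_mul !upper_mx3.
  move=> [T /and3P [/eqP H1 /eqP H2 /eqP H3] /and3P [/eqP H4 /eqP H5 /eqP H6]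
           /and3P [/eqP H7 /eqP H8 /eqP H9]].
  apply/vlineP; exists (X 0 0); rewrite /dmx mx3_scale; congr mx3; lra.
move=> /vlineP [k ->]; rewrite /dmx mx3_scale; split.
- by rewrite tr_mx3; ring.
- by apply: upper_eq0; ring.
- by rewrite /w0 !mx3_mul; apply: upper_eq0; ring.
- by rewrite /s1 /nmx !mx3_mul; apply: upper_eq0; ring.
Qed.

Lemma orbit_dim_b1 : orbit_dim (1%:M, w0 R, s2 R *m nmx 0 0 1) 7.
Proof.
exists 1%N, [tuple dmx (-2) 1 1]; split => //=.
  by rewrite seq1_free dmx_neq0 // oppr_eq0 pnatr_eq0.
move=> X; rewrite (stabLieE X inv_s2n1) span_seq1; split.
  rewrite (mx3_eta X) tr_mx3 /w0 /s2 /nmx !mx3_mul !upper_mx3.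
  move=> [T /and3P [/eqP H1 /eqP H2 /eqP H3] /and3P [/eqP H4 /eqP H5 /eqP H6]
           /and3P [/eqP H7 /eqP H8 /eqP H9]].
  apply/vlineP; exists (X 1 1); rewrite /dmx mx3_scale; congr mx3; lra.
move=> /vlineP [k ->]; rewrite /dmx mx3_scale; split.
- by rewrite tr_mx3; ring.
- by apply: upper_eq0; ring.
- by rewrite /w0 !mx3_mul; apply: upper_eq0; ring.
- by rewrite /s2 /nmx !mx3_mul; apply: upper_eq0; ring.
Qed.

Lemma orbit_dim_a2 : orbit_dim (1%:M, w0 R, s1 R *m nmx 0 0 0) 6.
Proof.
apply: (orbit_dim_diag inv_s1n0) => p q r.
by rewrite /s1 /nmx /dmx !mx3_mul; apply: upper_eq0; ring.
Qed.

Lemma orbit_dim_b2 : orbit_dim (1%:M, w0 R, s2 R *m nmx 0 0 0) 6.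
Proof.
apply: (orbit_dim_diag inv_s2n0) => p q r.
by rewrite /s2 /nmx /dmx !mx3_mul; apply: upper_eq0; ring.
Qed.

Lemma orbit_dim_c : orbit_dim (1%:M, w0 R, 1%:M) 6.
Proof.
apply: orbit_dim_diag; first exact: invmx1.
move=> p q r.
by rewrite mul1mx mulmx1; apply: upper_eq0.
Qed.


Lemma core_a (r : 'M[R]_3) : inP r ->
  (exists p' a b c, [/\ inP p', a * b * c = 1 & s1 R *m r = p' *m (s1 R *m nmx 1 0 0) *m dmx a b c]) \/
  (exists p' a b c, [/\ inP p', a * b * c = 1 & s1 R *m r = p' *m (s1 R *m nmx 0 0 0) *m dmx a b c]).
Proof.
move=> /inPP [a [b [c [e [f [k [D ->]]]]]]].
have [a0 e0 k0] := det_nz D.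
have [b0|b0] := eqVneq b 0.
  right; exists (mx3 e 0 (-f) 0 a (-c) 0 0 k), 1, 1, 1; split.
  - apply/inPP; exists e, 0, (-f), a, (-c), k; split => //; transitivity (a*e*k); [ring | exact: D].
  - by rewrite !mulr1.
  - by rewrite /s1 /nmx /dmx !mx3_mul b0; congr mx3; ring.
left; exists (mx3 (e/b) 0 (-f*a*b) 0 1 (-c*a*b) 0 0 (k*a*b)), a, b, (a*b)^-1; split.
- apply/inPP; exists (e/b), 0, (-f*a*b), 1, (-c*a*b), (k*a*b); split => //.
  by transitivity (a*e*k); [field; exact: b0 | exact: D].
- by field; rewrite a0 b0.
- by rewrite /s1 /nmx /dmx !mx3_mul; congr mx3; field; rewrite ?a0 ?b0.
Qed.

Lemma core_b (r : 'M[R]_3) : inP r ->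
  (exists p' a b c, [/\ inP p', a * b * c = 1 & s2 R *m r = p' *m (s2 R *m nmx 0 0 1) *m dmx a b c]) \/
  (exists p' a b c, [/\ inP p', a * b * c = 1 & s2 R *m r = p' *m (s2 R *m nmx 0 0 0) *m dmx a b c]).
Proof.
move=> /inPP [a [b [c [e [f [k [D ->]]]]]]].
have [a0 e0 k0] := det_nz D.
have [f0|f0] := eqVneq f 0.
  right; exists (mx3 a (-c) (-b) 0 k 0 0 0 e), 1, 1, 1; split.
  - apply/inPP; exists a, (-c), (-b), k, 0, e; split => //; transitivity (a*e*k); [ring | exact: D].
  - by rewrite !mulr1.
  - by rewrite /s2 /nmx /dmx !mx3_mul f0; congr mx3; ring.
left; exists (mx3 (a*e*f) (-c/f + b/e) (-b/e) 0 (k/f) 0 0 0 1), (e*f)^-1, e, f; split.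
- apply/inPP; exists (a*e*f), (-c/f + b/e), (-b/e), (k/f), 0, 1; split => //.
  by transitivity (a*e*k); [field; exact: f0 | exact: D].
- by field; rewrite e0 f0.
- by rewrite /s2 /nmx /dmx !mx3_mul; congr mx3; field; rewrite ?e0 ?f0.
Qed.


Lemma ptG (m : 'M[R]_3) : inG m -> isPt (1%:M, w0 R, m).
Proof. by move=> Gm; split => //=; [rewrite /inG det1 | exact: w0G]. Qed.

Lemma h_of_E1 (p1 h : 'M[R]_3) : inP p1 -> 1%:M = p1 *m (1%:M *m h) -> inP h.
Proof. by move=> P1; rewrite mul1mx => /esym /invmx_eq <-; exact: inP_inv. Qed.

Lemma stab_fwd (m h : 'M[R]_3) : inG m -> inStab (1%:M, w0 R, m) h ->
  exists u x z p3, [/\ u * x * z = 1, h = dmx u x z, inP p3 & m = p3 *m (m *m dmx u x z)].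
Proof.
move=> Gm /(stabP _ (ptG Gm)) [Gh [p1 [p2 [p3 [[P1 P2 P3] /= [E1 E2 E3]]]]]].
have Ph := h_of_E1 P1 E1.
have [u [x [z [D Eh]]]] := diag_of P2 Ph E2.
by exists u, x, z, p3; split => //; rewrite -Eh.
Qed.

Lemma orbit_fwd (m m' : 'M[R]_3) : inG m -> inOrbit (1%:M, w0 R, m) (1%:M, w0 R, m') ->
  exists u x z p3, [/\ u * x * z = 1, inP p3 & m' = p3 *m (m *m dmx u x z)].
Proof.
move=> Gm /(orbitP _ (ptG Gm)) [h [Gh [p1 [p2 [p3 [[P1 P2 P3] /= [E1 E2 E3]]]]]]].
have Ph := h_of_E1 P1 E1.
have [u [x [z [D Eh]]]] := diag_of P2 Ph E2.
by exists u, x, z, p3; split => //; rewrite -Eh.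
Qed.

Lemma stab_bwd (m p3 : 'M[R]_3) a b c : inG m -> a * b * c = 1 -> inP p3 ->
  m = p3 *m (m *m dmx a b c) -> inStab (1%:M, w0 R, m) (dmx a b c).
Proof.
move=> Gm D P3 E3; apply/(stabP _ (ptG Gm)); split; first exact: dmxG.
have [a0 b0 c0] := det_nz D.
exists (dmx a^-1 b^-1 c^-1), (dmx c^-1 b^-1 a^-1), p3; split; split => /=.
- apply: dmxP; rewrite -[1]invr1 -D !invfM; field; by rewrite ?a0 ?b0 ?c0.
- apply: dmxP; rewrite -[1]invr1 -D !invfM; field; by rewrite ?a0 ?b0 ?c0.
- by [].
- by rewrite id3 /dmx !mx3_mul; congr mx3; field; rewrite ?a0 ?b0 ?c0.
- by rewrite /w0 /dmx !mx3_mul; congr mx3; field; rewrite ?a0 ?b0 ?c0.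
- by [].
Qed.

Lemma det_dmx a b c : \det (dmx a b c : 'M[R]_3) = a * b * c.
Proof. by rewrite /dmx mx3_det; ring. Qed.


Lemma G_s1n1 : inG (s1 R *m nmx 1 0 0).
Proof. by rewrite /inG /s1 /nmx mx3_mul mx3_det; apply/eqP; ring. Qed.
Lemma G_s1n0 : inG (s1 R *m nmx 0 0 0).
Proof. by rewrite /inG /s1 /nmx mx3_mul mx3_det; apply/eqP; ring. Qed.
Lemma G_s2n1 : inG (s2 R *m nmx 0 0 1).
Proof. by rewrite /inG /s2 /nmx mx3_mul mx3_det; apply/eqP; ring. Qed.
Lemma G_s2n0 : inG (s2 R *m nmx 0 0 0).
Proof. by rewrite /inG /s2 /nmx mx3_mul mx3_det; apply/eqP; ring. Qed.
Lemma G_1 : inG (1%:M : 'M[R]_3).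
Proof. by rewrite /inG det1. Qed.
Lemma G_s1 : inG (s1 R).
Proof. by rewrite /inG /s1 mx3_det; apply/eqP; ring. Qed.
Lemma G_s2 : inG (s2 R).
Proof. by rewrite /inG /s2 mx3_det; apply/eqP; ring. Qed.

Lemma zinv (u z : R) : u * u * z = 1 -> z = u ^-2.
Proof.
move=> D; have [u0 _ _] := det_nz D.
have -> : z = (u * u * z) / u ^+ 2 by field.
by rewrite D mul1r.
Qed.

Lemma stab_a1 (h : 'M[R]_3) :
  inStab (1%:M, w0 R, s1 R *m nmx 1 0 0) h <-> exists a : R, a != 0 /\ h = dmx a a (a ^-2).
Proof.
split.
  case/(stab_fwd G_s1n1) => u [x [z [p3 [D -> P3 E3]]]].
  move/inPP: P3 => [a [b [c [e [f [k [Dp Ep]]]]]]]; rewrite Ep in E3.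
  move: E3; rewrite /s1 /nmx /dmx !mx3_mul => /mx3_inj [E11 [E12 [E13 [E21 [E22 [E23 [E31 [E32 E33]]]]]]]].
  have [a0 e0 k0] := det_nz Dp; have [u0 x0 z0] := det_nz D.
  have xu : x = u.
    by apply/eqP; rewrite -subr_eq0; apply/eqP; apply: (mulfI0 e0); lra.
  exists u; split => //; rewrite xu in D *; by rewrite (zinv D).
case=> a [a0 ->].
have D : a * a * a ^-2 = 1 by field.
apply: (@stab_bwd _ (dmx a^-1 a^-1 (a^+2))) => //; first exact: G_s1n1.
  by apply: dmxP; field.
by rewrite /s1 /nmx /dmx !mx3_mul; congr mx3; field.
Qed.

Lemma stab_b1 (h : 'M[R]_3) :
  inStab (1%:M, w0 R, s2 R *m nmx 0 0 1) h <-> exists a : R, a != 0 /\ h = dmx (a ^-2) a a.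
Proof.
split.
  case/(stab_fwd G_s2n1) => u [x [z [p3 [D -> P3 E3]]]].
  move/inPP: P3 => [a [b [c [e [f [k [Dp Ep]]]]]]]; rewrite Ep in E3.
  move: E3; rewrite /s2 /nmx /dmx !mx3_mul => /mx3_inj [E11 [E12 [E13 [E21 [E22 [E23 [E31 [E32 E33]]]]]]]].
  have [a0 e0 k0] := det_nz Dp; have [u0 x0 z0] := det_nz D.
  have zx : z = x.
    by apply/eqP; rewrite -subr_eq0; apply/eqP; apply: (mulfI0 k0); lra.
  have D' : x * x * u = 1 by rewrite -D zx; ring.
  exists x; split => //; rewrite zx; by rewrite (zinv D').
case=> a [a0 ->].
have D : a ^-2 * a * a = 1 by field.
apply: (@stab_bwd _ (dmx (a^+2) a^-1 a^-1)) => //; first exact: G_s2n1.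
  by apply: dmxP; field.
by rewrite /s2 /nmx /dmx !mx3_mul; congr mx3; field.
Qed.

Lemma stab_diag (m : 'M[R]_3) (h : 'M[R]_3) : inG m ->
  (forall a b c, a * b * c = 1 -> exists p3, inP p3 /\ m = p3 *m (m *m dmx a b c)) ->
  (inStab (1%:M, w0 R, m) h <-> inG h /\ exists a b c : R, h = dmx a b c).
Proof.
move=> Gm Hm; split.
  case/(stab_fwd Gm) => u [x [z [p3 [D -> P3 E3]]]].
  by split; [exact: dmxG | exists u, x, z].
case=> Gh [a [b [c Eh]]].
have D : a * b * c = 1 by move: Gh; rewrite /inG Eh det_dmx => /eqP.
have [p3 [P3 E3]] := Hm a b c D.
by rewrite Eh; exact: (stab_bwd Gm D P3 E3).
Qed.

Lemma stab_a2 (h : 'M[R]_3) :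
  inStab (1%:M, w0 R, s1 R *m nmx 0 0 0) h <-> inG h /\ exists a b c : R, h = dmx a b c.
Proof.
apply: stab_diag; first exact: G_s1n0.
move=> a b c D; have [a0 b0 c0] := det_nz D.
exists (dmx b^-1 a^-1 c^-1); split.
  apply: dmxP; rewrite -[1]invr1 -D !invfM; field; by rewrite ?a0 ?b0 ?c0.
by rewrite /s1 /nmx /dmx !mx3_mul; congr mx3; field; rewrite ?a0 ?b0 ?c0.
Qed.

Lemma stab_b2 (h : 'M[R]_3) :
  inStab (1%:M, w0 R, s2 R *m nmx 0 0 0) h <-> inG h /\ exists a b c : R, h = dmx a b c.
Proof.
apply: stab_diag; first exact: G_s2n0.
move=> a b c D; have [a0 b0 c0] := det_nz D.
exists (dmx a^-1 c^-1 b^-1); split.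
  apply: dmxP; rewrite -[1]invr1 -D !invfM; field; by rewrite ?a0 ?b0 ?c0.
by rewrite /s2 /nmx /dmx !mx3_mul; congr mx3; field; rewrite ?a0 ?b0 ?c0.
Qed.

Lemma stab_c (h : 'M[R]_3) :
  inStab (1%:M, w0 R, 1%:M) h <-> inG h /\ exists a b c : R, h = dmx a b c.
Proof.
apply: stab_diag; first exact: G_1.
move=> a b c D; have [a0 b0 c0] := det_nz D.
exists (dmx a^-1 b^-1 c^-1); split.
  apply: dmxP; rewrite -[1]invr1 -D !invfM; field; by rewrite ?a0 ?b0 ?c0.
by rewrite id3 /dmx !mx3_mul; congr mx3; field; rewrite ?a0 ?b0 ?c0.
Qed.

Lemma norbit_a : ~ inOrbit (1%:M, w0 R, s1 R *m nmx 1 0 0) (1%:M, w0 R, s1 R *m nmx 0 0 0).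
Proof.
case/(orbit_fwd G_s1n1) => u [x [z [p3 [D P3 E3]]]].
move/inPP: P3 => [a [b [c [e [f [k [Dp Ep]]]]]]]; rewrite Ep in E3.
move: E3; rewrite /s1 /nmx /dmx !mx3_mul => /mx3_inj [E11 [E12 [E13 [E21 [E22 [E23 [E31 [E32 E33]]]]]]]].
have [a0 e0 k0] := det_nz Dp; have [u0 x0 z0] := det_nz D.
have : x = 0 by apply: (mulfI0 e0); lra.
by move/eqP; rewrite (negbTE x0).
Qed.

Lemma norbit_b : ~ inOrbit (1%:M, w0 R, s2 R *m nmx 0 0 1) (1%:M, w0 R, s2 R *m nmx 0 0 0).
Proof.
case/(orbit_fwd G_s2n1) => u [x [z [p3 [D P3 E3]]]].
move/inPP: P3 => [a [b [c [e [f [k [Dp Ep]]]]]]]; rewrite Ep in E3.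
move: E3; rewrite /s2 /nmx /dmx !mx3_mul => /mx3_inj [E11 [E12 [E13 [E21 [E22 [E23 [E31 [E32 E33]]]]]]]].
have [a0 e0 k0] := det_nz Dp; have [u0 x0 z0] := det_nz D.
have : z = 0 by apply: (mulfI0 k0); lra.
by move/eqP; rewrite (negbTE z0).
Qed.


Lemma nP (x y z : R) : inP (nmx x y z).
Proof. by apply/inPP; exists 1, x, y, 1, z, 1; split => //; rewrite !mulr1. Qed.

Lemma bruhat_sn (s : 'M[R]_3) x y z : bruhat s (s *m nmx x y z).
Proof. by exists 1%:M, (nmx x y z); split; [exact: inP1 | exact: nP | rewrite mul1mx]. Qed.

Lemma S_a (y : pt R) : inS (w0 R) (s1 R) y <->
  isPt y /\ (inOrbit (1%:M, w0 R, s1 R *m nmx 1 0 0) y \/ inOrbit (1%:M, w0 R, s1 R *m nmx 0 0 0) y).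
Proof.
split.
  case/S_decomp => Py [r [g [p0 [p1 [q1 [[Pr Gg P0 P1 Q1] [E1 E2 E3]]]]]]].
  split => //; case: (core_a Pr) => [[p' [a [b [c [P' D Es]]]]]|[p' [a [b [c [P' D Es]]]]]].
    by left; apply: (decomp_orbit G_s1n1 Pr Gg P0 P1 Q1 P' D E1 E2 E3 Es).
  by right; apply: (decomp_orbit G_s1n0 Pr Gg P0 P1 Q1 P' D E1 E2 E3 Es).
case=> Py [O|O]; apply: (orbit_S G_s1 _ Py O); exact: bruhat_sn.
Qed.

Lemma S_b (y : pt R) : inS (w0 R) (s2 R) y <->
  isPt y /\ (inOrbit (1%:M, w0 R, s2 R *m nmx 0 0 1) y \/ inOrbit (1%:M, w0 R, s2 R *m nmx 0 0 0) y).
Proof.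
split.
  case/S_decomp => Py [r [g [p0 [p1 [q1 [[Pr Gg P0 P1 Q1] [E1 E2 E3]]]]]]].
  split => //; case: (core_b Pr) => [[p' [a [b [c [P' D Es]]]]]|[p' [a [b [c [P' D Es]]]]]].
    by left; apply: (decomp_orbit G_s2n1 Pr Gg P0 P1 Q1 P' D E1 E2 E3 Es).
  by right; apply: (decomp_orbit G_s2n0 Pr Gg P0 P1 Q1 P' D E1 E2 E3 Es).
case=> Py [O|O]; apply: (orbit_S G_s2 _ Py O); exact: bruhat_sn.
Qed.

Lemma S_c (y : pt R) : inS (w0 R) 1%:M y <-> isPt y /\ inOrbit (1%:M, w0 R, 1%:M) y.
Proof.
split.
  case/S_decomp => Py [r [g [p0 [p1 [q1 [[Pr Gg P0 P1 Q1] [E1 E2 E3]]]]]]].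
  split => //.
  have Es : 1%:M *m r = r *m 1%:M *m dmx 1 1 1 by rewrite mul1mx mulmx1 /dmx -id3 mulmx1.
  have D : (1 : R) * 1 * 1 = 1 by rewrite !mulr1.
  exact: (decomp_orbit G_1 Pr Gg P0 P1 Q1 Pr D E1 E2 E3 Es).
case=> Py O; apply: (orbit_S G_1 _ Py O).
by exists 1%:M, 1%:M; split; [exact: inP1 | exact: inP1 | rewrite !mulmx1].
Qed.

End L2.

Unset Implicit Arguments.

Theorem mainTheorem8 (R : realType) :
  (* (a) *)
  (let x1 : pt R := (1%:M, w0 R, s1 R *m nmx 1 0 0) in
   let x2 : pt R := (1%:M, w0 R, s1 R *m nmx 0 0 0) in
   (forall y, inS (w0 R) (s1 R) y <-> isPt y /\ (inOrbit x1 y \/ inOrbit x2 y)) /\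
       ~ inOrbit x1 x2 /\
       orbit_dim x1 7 /\
       (forall h, inStab x1 h <-> exists a : R, a != 0 /\ h = dmx a a (a ^-2)) /\
       orbit_dim x2 6 /\
       (forall h, inStab x2 h <-> inG h /\ exists a b c : R, h = dmx a b c)) /\
  (* (b) *)
  (let x1 : pt R := (1%:M, w0 R, s2 R *m nmx 0 0 1) in
   let x2 : pt R := (1%:M, w0 R, s2 R *m nmx 0 0 0) in
   (forall y, inS (w0 R) (s2 R) y <-> isPt y /\ (inOrbit x1 y \/ inOrbit x2 y)) /\
       ~ inOrbit x1 x2 /\
       orbit_dim x1 7 /\
       (forall h, inStab x1 h <-> exists a : R, a != 0 /\ h = dmx (a ^-2) a a) /\
       orbit_dim x2 6 /\
       (forall h, inStab x2 h <-> inG h /\ exists a b c : R, h = dmx a b c)) /\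
  (* (c) *)
  (let x0 : pt R := (1%:M, w0 R, 1%:M) in
   (forall y, inS (w0 R) 1%:M y <-> isPt y /\ inOrbit x0 y) /\
       orbit_dim x0 6 /\
       (forall h, inStab x0 h <-> inG h /\ exists a b c : R, h = dmx a b c)).
Proof.
cbv zeta.
split; first by split; [exact: S_a | split; [exact: norbit_a | split; [exact: orbit_dim_a1 |
  split; [exact: stab_a1 | split; [exact: orbit_dim_a2 | exact: stab_a2]]]]].
split; first by split; [exact: S_b | split; [exact: norbit_b | split; [exact: orbit_dim_b1 |
  split; [exact: stab_b1 | split; [exact: orbit_dim_b2 | exact: stab_b2]]]]].
by split; [exact: S_c | split; [exact: orbit_dim_c | exact: stab_c]].
Qed.
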